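(* Let $p\ge1$ and let $X=(X,d,\mu)$ be an infinitesimally doubling metric measure space which is $p$-thick quasiconvex with constant $C\ge1$. Then every $u\in N^{1,p}(X)$ whose minimal $p$-weak upper gradient satisfies $g_u\le1$ almost everywhere has a $C$-Lipschitz representative.
   Context: A metric measure space is a proper metric space with a Borel regular outer measure positive and finite on balls; infinitesimally doubling means $\limsup_{r\to0}\mu(B(x,2r))/\mu(B(x,r))<\infty$ for $\mu$-a.e. $x$. $\operatorname{Mod}_p\Gamma=\inf\int\rho^pd\mu$ over Borel $\rho\ge0$ with $\int_\gamma\rho\ge1$ for all $\gamma\in\Gamma$. $N^{1,p}(X)$ is the Newtonian Sobolev space; $g_u$ the minimal $p$-weak upper gradient. For $E,F\subset X$ and $C\ge1$, $\Gamma(E,F;C)$ is the family of curves $\gamma:[0,1]\to X$ with $\gamma(0)\in E$, $\gamma(1)\in F$ and $\ell(\gamma)\le Cd(\gamma(0),\gamma(1))$. $X$ is $p$-thick quasiconvex with constant $C$ if $\operatorname{Mod}_p\Gamma(E,F;C)>0$ for all measurable $E,F$ of positive measure. *)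

(* Defs.v *)
From HB Require Import structures.
From mathcomp Require Import all_boot all_order all_algebra.
From mathcomp Require Import all_classical all_reals all_analysis measurable_realfun.
Set Implicit Arguments. Unset Strict Implicit. Unset Printing Implicit Defensive.
Import Order.TTheory GRing.Theory Num.Theory.
Local Open Scope classical_set_scope.
Local Open Scope ring_scope.

Section MMS.
Context {R : realType} {disp : measure_display} {T : measurableType disp}.
Variable dist : T -> T -> R.

Definition is_metric : Prop :=
  [/\ forall x y, 0 <= dist x y,
      forall x y, dist x y = 0 <-> x = y,
      forall x y, dist x y = dist y x &
      forall x y z, dist x z <= dist x y + dist y z].

Definition dball (x : T) (r : R) : set T := [set y | dist x y < r].

Definition dopen (A : set T) : Prop :=
  forall x, A x -> exists2 r : R, 0 < r & dball x r `<=` A.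

Definition dclosed (A : set T) : Prop := dopen (~` A).

Definition dbounded (A : set T) : Prop := exists x r, A `<=` dball x r.

Definition dconverges (s : nat -> T) (x : T) : Prop :=
  forall e : R, 0 < e -> exists N, forall n, (N <= n)%N -> dist (s n) x < e.

(* sequential compactness (equivalent to compactness in metric spaces) *)
Definition dcompact (K : set T) : Prop :=
  forall s : nat -> T, (forall n, K (s n)) ->
    exists (phi : nat -> nat) (x : T),
      (forall n m, (n < m)%N -> (phi n < phi m)%N) /\ K x /\ dconverges (s \o phi) x.

Definition dproper : Prop :=
  forall K, dclosed K -> dbounded K -> dcompact K.

Definition borel_structure : Prop :=
  (@measurable disp T) = <<s dopen >>.

Variable mu : {measure set T -> \bar R}.

Definition balls_pos_finite : Prop :=
  forall x (r : R), 0 < r -> (0 < mu (dball x r))%E /\ (mu (dball x r) < +oo)%E.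

Definition metric_measure_space : Prop :=
  [/\ is_metric, dproper, borel_structure & balls_pos_finite].

(* limsup_{r->0} mu(B(x,2r))/mu(B(x,r)) < oo for mu-a.e. x, unfolded *)
Definition infinitesimally_doubling : Prop :=
  {ae mu, forall x, exists M : R, exists2 r0 : R, 0 < r0 &
     forall r : R, 0 < r -> r < r0 ->
       (mu (dball x (2 * r)) <= M%:E * mu (dball x r))%E}.

(* curves gamma : [0,1] -> X, represented as functions R -> T (only the
   values on [0,1] matter) *)
Definition curve (g : R -> T) : Prop :=
  forall t, 0 <= t <= 1 -> forall e : R, 0 < e -> exists2 del : R, 0 < del &
    forall s, 0 <= s <= 1 -> `|s - t| < del -> dist (g s) (g t) < e.

Definition len (g : R -> T) (a b : R) : \bar R :=
  ereal_sup [set z | exists (n : nat) (t : nat -> R),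
     [/\ t 0%N = a, t n = b, (forall i, t i <= t i.+1) &
         z = (\sum_(i < n) dist (g (t i)) (g (t i.+1)))%:E]].

Definition ell (g : R -> T) : \bar R := len g 0 1.

Definition rectifiable (g : R -> T) : Prop := (ell g < +oo)%E.

(* arc-length parametrization gamma~ : [0, ell gamma] -> X, with
   gamma = gamma~ o s_gamma *)
Definition arclen_param (g : R -> T) (s : R) : T :=
  g (inf [set t : R | 0 <= t <= 1 /\ (s%:E <= len g 0 t)%E]).

Definition line_int (rho : T -> \bar R) (g : R -> T) : \bar R :=
  (\int[lebesgue_measure]_(s in [set x : R | (0 <= x <= fine (ell g))%R]) rho (arclen_param g s))%E.

Definition admissible (p : R) (G : set (R -> T)) (rho : T -> \bar R) : Prop :=
  [/\ measurable_fun [set: T] rho, forall x, (0 <= rho x)%E &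
      forall g, G g -> (1 <= line_int rho g)%E].

Definition Mod (p : R) (G : set (R -> T)) : \bar R :=
  ereal_inf [set (\int[mu]_x (rho x `^ p))%E | rho in admissible p G].

Definition Gam (E F : set T) (C : R) : set (R -> T) :=
  [set g | curve g /\ E (g 0) /\ F (g 1) /\ (ell g <= (C * dist (g 0) (g 1))%:E)%E].

Definition thick_quasiconvex (p C : R) : Prop :=
  1 <= C /\
  forall E F : set T, measurable E -> measurable F ->
    (0 < mu E)%E -> (0 < mu F)%E -> (0 < Mod p (Gam E F C))%E.

Definition pwug (p : R) (u : T -> R) (g : T -> \bar R) : Prop :=
  [/\ measurable_fun [set: T] g, forall x, (0 <= g x)%E &
      Mod p [set c | curve c /\ rectifiable c /\
                     ~ ((`|u (c 0) - u (c 1)|)%:E <= line_int g c)%E] = 0%E].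

Definition Lp_ext (p : R) (g : T -> \bar R) : Prop :=
  (\int[mu]_x (`|g x| `^ p) < +oo)%E.

Definition newtonian (p : R) (u : T -> R) : Prop :=
  [/\ measurable_fun [set: T] u,
      (\int[mu]_x ((`|u x| `^ p)%:E) < +oo)%E &
      exists g, pwug p u g /\ Lp_ext p g].

Definition minimal_pwug (p : R) (u : T -> R) (g : T -> \bar R) : Prop :=
  [/\ pwug p u g, Lp_ext p g &
      forall g', pwug p u g' -> Lp_ext p g' -> {ae mu, forall x, (g x <= g' x)%E}].

Definition lipschitz_with (L : R) (v : T -> R) : Prop :=
  forall x y, `|v x - v y| <= L * dist x y.

End MMS.

(* Main.v *)
Require Import Defs.
From HB Require Import structures.
From mathcomp Require Import all_boot all_order all_algebra.
From mathcomp Require Import all_classical all_reals all_analysis measurable_realfun.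
From mathcomp Require Import lra ring.
Import numFieldNormedType.Exports.
Import Order.TTheory GRing.Theory Num.Theory.
Local Open Scope classical_set_scope.
Local Open Scope ring_scope.
Section S.
Context {R : realType} {disp : measure_display} {T : measurableType disp}.
Variable dist : T -> T -> R.
Variable mu : {measure set T -> \bar R}.
Hypothesis hm : is_metric dist.

Lemma d_ge0 x y : 0 <= dist x y. Proof. by case: hm. Qed.
Lemma d_sym x y : dist x y = dist y x. Proof. by case: hm. Qed.
Lemma d_tri x y z : dist x z <= dist x y + dist y z. Proof. by case: hm. Qed.
Lemma d_xx x : dist x x = 0. Proof. by case: hm => _ H _ _; apply/H. Qed.

Lemma dball_open x r : dopen dist (dball dist x r).
Proof.
move=> y /= hy; exists (r - dist x y); first by rewrite subr_gt0.
move=> w /= hw; apply: (le_lt_trans (d_tri x y w)).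
by rewrite -ltrBrDl.
Qed.

Hypothesis hB : borel_structure dist.

Lemma dopen_meas A : dopen dist A -> measurable A.
Proof. by move=> oA; rewrite hB; exact: sub_sigma_algebra. Qed.

Lemma dball_meas x r : measurable (dball dist x r).
Proof. exact/dopen_meas/dball_open. Qed.

Lemma level_meas (u : T -> R) a e : measurable_fun setT u ->
  measurable [set z | `|u z - a| < e].
Proof.
move=> mu_; have := mu_ measurableT [set y : R | `|y - a| < e].
rewrite setTI; apply.
have -> : [set y : R | `|y - a| < e] = [set` `]a - e, a + e[%R].
  by apply/seteqP; split => y /=; rewrite in_itv /= ltr_distl.
exact: measurable_itv.
Qed.

Hypothesis hp : dproper dist.

Lemma finite_net z0 (n e : R) : 0 < e ->
  exists (m : nat) (c : nat -> T), forall x, dist z0 x <= n ->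
    exists j, (j < m)%N /\ dist (c j) x < e.
Proof.
move=> e0; apply: contrapT => H.
have H' : forall m (c : nat -> T), exists x, dist z0 x <= n /\
    forall j, (j < m)%N -> e <= dist (c j) x.
  move=> m c; apply: contrapT => H2; apply: H; exists m, c => x hx.
  apply: contrapT => H3; apply: H2; exists x; split => // j hj.
  rewrite leNgt; apply/negP => hlt; apply: H3; by exists j.
pose f m c := projT1 (cid (H' m c)).
have hf m c : dist z0 (f m c) <= n /\
    forall j, (j < m)%N -> e <= dist (c j) (f m c) := projT2 (cid (H' m c)).
pose F := fix F k := match k with 0 => fun _ : nat => z0
  | k'.+1 => fun j => if (j < k')%N then F k' j else f k' (F k') end.
pose s j := F j.+1 j.
have Fs k j : (j < k)%N -> F k j = s j.
  elim: k => // k IH; rewrite ltnS leq_eqVlt => /orP[/eqP ->|hjk].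
    by [].
  by rewrite /= hjk IH.
have sm m : s m = f m (F m) by rewrite /s /= ltnn.
have sep j m : (j < m)%N -> e <= dist (s j) (s m).
  by move=> hjm; rewrite (sm m) -(Fs m j hjm); apply: (hf m (F m)).2.
have sK k : dist z0 (s k) <= n by rewrite sm; exact: (hf _ _).1.
have Kc : dclosed dist [set x | dist z0 x <= n].
  move=> y /= hy; have ny : n < dist z0 y by rewrite ltNge; apply/negP.
  exists (dist z0 y - n); first by rewrite subr_gt0.
  move=> w hw hwn; rewrite /dball /= in hw hwn; have := d_tri z0 w y; rewrite (d_sym w y).
  by lra.
have Kb : dbounded dist [set x | dist z0 x <= n].
  by exists z0, (n + 1) => x /= hx; rewrite /dball /=; apply: (le_lt_trans hx); rewrite ltrDl.
have [phi [x [hphi [_ hconv]]]] := hp _ Kc Kb s sK.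
have [N HN] := hconv (e / 2) (divr_gt0 e0 (ltr0Sn _ 1)).
have := sep _ _ (hphi N N.+1 (ltnSn N)).
have h1 := HN N (leqnn N); have h2 := HN N.+1 (leqnSn N).
rewrite /= in h1 h2.
have := d_tri (s (phi N)) x (s (phi N.+1)); rewrite (d_sym x) => h3 h4.
by lra.
Qed.

Lemma ell_ge0 g : (0 <= ell dist g)%E.
Proof.
apply: (@le_trans _ _ (dist (g 0) (g 1))%:E); first by rewrite lee_fin d_ge0.
apply: ereal_sup_ubound.
exists 1%N, (fun i => if i == 0%N then 0 else 1); split => //.
  by case => [|i] //=; rewrite ?ler01 ?lexx.
by rewrite big_ord1.
Qed.

Definition Dl (g : R -> T) := [set x : R | 0 <= x <= fine (ell dist g)].

Lemma Dl_itv g : Dl g = [set` `[0, fine (ell dist g)]%R].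
Proof. by apply/seteqP; split => x /=; rewrite in_itv. Qed.

Lemma Dl_meas g : measurable (Dl g).
Proof. by rewrite Dl_itv; exact: measurable_itv. Qed.

Lemma arclen_meas (g : R -> T) (rho : T -> \bar R) :
  curve dist g -> (ell dist g < +oo)%E -> measurable_fun setT rho ->
  measurable_fun (Dl g) (fun s => rho (arclen_param dist g s)).
Proof.
move=> hg hfin mrho.
set l := fine (ell dist g).
have ellE : ell dist g = l%:E.
  by rewrite /l fineK // ge0_fin_numE // ell_ge0.
pose A s := [set t : R | (0 <= t <= 1) /\ ((s%:E <= len dist g 0 t)%E \/ t = 1)].
pose tt s := inf (A s).
have A1 s : A s 1 by split; [rewrite ler01 lexx | right].
have Alb s : has_lbound (A s) by exists 0 => y [/andP[]].
have tt01 s : 0 <= tt s <= 1.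
  apply/andP; split; first by apply: lb_le_inf; [exists 1|move=> y [/andP[]]].
  exact: ge_inf (Alb s) _ (A1 s).
have ttnd : {homo tt : x y / x <= y}.
  move=> s s' ss'; apply: lb_le_inf; first by exists 1.
  move=> y [hy hy']; apply: ge_inf (Alb s) _ _; split => //.
  case: hy' => [hl|]; last by right.
  by left; apply: le_trans hl; rewrite lee_fin.
have arcE s : Dl g s -> arclen_param dist g s = g (tt s).
  move=> /andP[s0 sl]; rewrite /arclen_param /tt; congr (g (inf _)).
  apply/seteqP; split => y /= [hy hy']; split => //; first by left.
  case: hy' => // ->; rewrite -/(ell dist g) ellE lee_fin //.
have mtt : measurable_fun (Dl g) tt.
  exact: nondecreasing_measurable (Dl_meas g) ttnd.
have mh : measurable_fun (Dl g) (g \o tt).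
  apply: (@measurability _ _ _ _ (Dl g) (g \o tt) (dopen dist) hB).
  move=> _ [W oW <-].
  pose V := [set t : R | exists2 e : R, 0 < e &
    forall s, 0 <= s <= 1 -> `|s - t| < e -> W (g s)].
  have VO t : 0 <= t <= 1 -> V t <-> W (g t).
    move=> ht; split.
      by move=> [e e0 H]; apply: H => //; rewrite subrr normr0.
    move=> Ot; have [r r0 Hr] := oW _ Ot.
    have [del del0 Hd] := hg t ht r r0.
    exists del => // s hs hst; apply: Hr; rewrite /dball /= d_sym; exact: Hd.
  have oV : open V.
    rewrite openE => t [e e0 H]; apply/nbhs_ballP; exists (e / 2) => /=.
      by rewrite divr_gt0.
    move=> t' Btt'; exists (e / 2); first by rewrite divr_gt0.
    move=> s hs hst; apply: H => //.
    move: Btt'; rewrite /ball /= => Btt'.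
    have -> : s - t = (s - t') + (t' - t) by rewrite addrA subrK.
    apply: (le_lt_trans (ler_normD _ _)); rewrite (distrC t' t).
    by rewrite [e in _ < e](splitr e) ltrD.
  have -> : Dl g `&` (g \o tt) @^-1` W = Dl g `&` tt @^-1` V.
    by apply/seteqP; split => s [Ds hs]; split => //=; apply/(VO _ (tt01 s)).
  exact: mtt (Dl_meas g) _ (open_measurable oV).
apply: eq_measurable_fun (measurableT_comp mrho mh).
by move=> s /set_mem Ds /=; rewrite arcE.
Qed.

Lemma line_intE rho g : line_int dist rho g =
  (\int[lebesgue_measure]_(s in Dl g) rho (arclen_param dist g s))%E.
Proof. by []. Qed.

Lemma line_int_mono (r1 r2 : T -> \bar R) g : curve dist g -> (ell dist g < +oo)%E ->
  measurable_fun setT r1 -> measurable_fun setT r2 -> (forall x, 0 <= r1 x)%E ->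
  (forall x, r1 x <= r2 x)%E -> (line_int dist r1 g <= line_int dist r2 g)%E.
Proof.
move=> hg hf m1 m2 r10 r12; rewrite !line_intE.
apply: ge0_le_integral => //.
- exact: Dl_meas.
- exact: arclen_meas.
- exact: arclen_meas.
Qed.

Lemma leb_Dl g : (ell dist g < +oo)%E -> lebesgue_measure (Dl g) = (fine (ell dist g))%:E.
Proof.
move=> hf; rewrite Dl_itv lebesgue_measure_itv /=.
have l0 : 0 <= fine (ell dist g) by apply: fine_ge0; exact: ell_ge0.
case: ifPn => [_|]; first by rewrite sube0.
rewrite lte_fin -leNgt => h; have -> : fine (ell dist g) = 0 by apply/le_anti; rewrite h l0.
by [].
Qed.

Lemma line_int_add1 (r : T -> \bar R) g : curve dist g -> (ell dist g < +oo)%E ->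
  measurable_fun setT r -> (forall x, 0 <= r x)%E ->
  line_int dist (fun x => r x + 1)%E g = (line_int dist r g + (fine (ell dist g))%:E)%E.
Proof.
move=> hg hf mr r0; rewrite !line_intE ge0_integralD //.
- by rewrite (integral_cst lebesgue_measure (Dl_meas g) 1%E) mul1e; congr (_ + _)%E; exact: leb_Dl.
- exact: Dl_meas.
- exact: arclen_meas.
Qed.

Lemma line_int_dbl (r : T -> \bar R) g : curve dist g -> (ell dist g < +oo)%E ->
  measurable_fun setT r -> (forall x, 0 <= r x)%E ->
  line_int dist (fun x => r x + r x)%E g = (line_int dist r g + line_int dist r g)%E.
Proof.
move=> hg hf mr r0; rewrite !line_intE ge0_integralD //.
- exact: Dl_meas.
- exact: arclen_meas.
- exact: arclen_meas.
Qed.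

Variables (p C : R) (u : T -> R) (gu : T -> \bar R).
Hypothesis hthick : thick_quasiconvex dist mu p C.
Hypothesis hpw : pwug dist mu p u gu.
Hypothesis hg1 : {ae mu, forall x, (gu x <= 1)%E}.

Lemma key E F : measurable E -> measurable F -> (0 < mu E)%E -> (0 < mu F)%E ->
  exists x y, E x /\ F y /\ `|u x - u y| <= C * dist x y.
Proof.
move=> mE mF E0 F0; apply: contrapT => Hne.
have Hbad g : Gam dist E F C g -> C * dist (g 0) (g 1) < `|u (g 0) - u (g 1)|.
  move=> [_ [Eg [Fg _]]]; rewrite ltNge; apply/negP => hle; apply: Hne.
  by exists (g 0), (g 1).
have M0 := hthick.2 E F mE mF E0 F0.
case: hpw => mgu gu0 hmod1.
case: hg1 => N0 [mN0 muN0 hN0].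
have := M0; rewrite -hmod1 => /ereal_inf_lt [_ [rho1 [mr1 r10 hr1] <-] hlt].
pose rho2 : T -> \bar R := fun x => if x \in N0 then +oo%E else 0%E.
have mr2 : measurable_fun setT rho2.
  apply: measurable_fun_ifT => //.
  apply: (measurable_fun_bool true); rewrite setTI.
  have -> : (fun x => x \in N0) @^-1` [set true] = N0.
    by apply/seteqP; split => x /=; [move/set_mem|move/mem_set].
  exact: mN0.
have r20 x : (0 <= rho2 x)%E by rewrite /rho2; case: ifP.
pose rho : T -> \bar R := fun x => (rho1 x + rho2 x)%E.
have mr : measurable_fun setT rho := emeasurable_funD mr1 mr2.
have r0 x : (0 <= rho x)%E by apply: adde_ge0.
have adm : admissible dist p (Gam dist E F C) rho.
  split => // g hg.
  have [hc [Eg [Fg hell]]] := hg.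
  have hf : (ell dist g < +oo)%E by apply: le_lt_trans hell (ltry _).
  have [hin|hnin] := pselect ((`|u (g 0) - u (g 1)|)%:E <= line_int dist gu g)%E.
    have hgl : (line_int dist gu g <= line_int dist (fun x => rho2 x + 1) g)%E.
      apply: line_int_mono => //.
      - exact: emeasurable_funD mr2 (measurable_cst _).
      - move=> x; rewrite /rho2; case: ifPn => [_|hx]; first by rewrite addye ?leey.
        rewrite add0e; apply: contrapT => hgx.
        have : N0 x by apply: hN0.
        by move/mem_set; rewrite (negbTE hx).
    rewrite line_int_add1 // in hgl.
    have hd := Hbad g hg.
    have ellE : ell dist g = (fine (ell dist g))%:E.
      by rewrite fineK // ge0_fin_numE // ell_ge0.
    have hlC : fine (ell dist g) <= C * dist (g 0) (g 1).
      by rewrite -lee_fin -ellE.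
    set I := line_int dist rho2 g in hgl *.
    have I0 : (0 < I)%E.
      rewrite ltNge; apply/negP => hI.
      have : ((`|u (g 0) - u (g 1)|)%:E <= (fine (ell dist g))%:E)%E.
        apply: le_trans hin (le_trans hgl _).
        by rewrite -[X in (_ <= X)%E]add0e leeD2r.
      rewrite lee_fin => h.
      by have := lt_le_trans (lt_le_trans hd h) hlC; rewrite ltxx.
    have Idbl : I = (I + I)%E.
      rewrite /I -line_int_dbl //; congr line_int; apply/funext => x.
      by rewrite /rho2; case: ifP => _; rewrite ?addye ?adde0.
    have Iy : I = +oo%E.
      clear hgl; move: I0 Idbl; clearbody I; case: I => [r| |] //.
      rewrite lte_fin => rpos /eqP; rewrite -EFinD eqe => /eqP h.
      have : r + r = r + 0 by rewrite addr0 -h.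
      by move/addrI => r00; rewrite r00 ltxx in rpos.
    apply: (@le_trans _ _ I); first by rewrite Iy leey.
    apply: line_int_mono => // x; by rewrite /rho leeDr.
  apply: le_trans (hr1 g (conj hc (conj hf hnin))) _.
  apply: line_int_mono => // x; by rewrite /rho leeDl.
have hle : (Mod dist mu p (Gam dist E F C) <= \int[mu]_x (rho x `^ p))%E.
  by apply: ereal_inf_lbound; exists rho.
have : (\int[mu]_x (rho x `^ p) = \int[mu]_x (rho1 x `^ p))%E.
  apply: ae_eq_integral => //.
  - exact: measurableT_comp (measurable_poweR _) mr.
  - exact: measurableT_comp (measurable_poweR _) mr1.
  exists N0; split => // x /= hx; apply: contrapT => hnx; apply: hx => _.
  by rewrite /rho /rho2 memNset // adde0.
move=> heq; rewrite heq in hle.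
by have := le_lt_trans hle hlt; rewrite ltxx.
Qed.

Lemma net_seq (z0 : T) (n k : nat) : exists c : nat -> T, forall x,
  dist z0 x <= n%:R -> exists j, dist (c j) x < k.+1%:R^-1.
Proof.
have [m [c Hc]] := finite_net z0 n%:R (k.+1%:R^-1) (ltac:(by rewrite invr_gt0 ltr0Sn)).
exists c => x /Hc [j [_ hj]]; by exists j.
Qed.

Lemma good_ae (z0 : T) : measurable_fun setT u -> exists N, mu.-negligible N /\
  forall x, ~ N x -> forall r d, 0 < r -> 0 < d ->
    (0 < mu (dball dist x r `&` [set z | (`|u z - u x| < d)%R]))%E.
Proof.
move=> mu_.
pose cc n k := projT1 (cid (net_seq z0 n k)).
have hcc n k : forall x, dist z0 x <= n%:R -> exists j, dist (cc n k j) x < k.+1%:R^-1 :=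
  projT2 (cid (net_seq z0 n k)).
pose W n k j (z : int) := dball dist (cc n k j) (k.+1%:R^-1) `&`
  [set y | `|u y - z%:~R / k.+1%:R| < k.+1%:R^-1].
have mW n k j z : measurable (W n k j z).
  by apply: measurableI; [exact: dball_meas | exact: level_meas].
pose W' n k j z := [set y | W n k j z y /\ mu (W n k j z) = 0%E].
have nW' n k j z : mu.-negligible (W' n k j z).
  have [h|h] := pselect (mu (W n k j z) = 0%E).
    by exists (W n k j z); split => // y [].
  by exists set0; split => // y [_ /h].
exists (\bigcup_n \bigcup_k \bigcup_j \bigcup_i (W' n k j (Posz i) `|` W' n k j (- Posz i))).
split.
  apply: negligible_bigcup => n; apply: negligible_bigcup => k.
  apply: negligible_bigcup => j; apply: negligible_bigcup => i.
  exact: negligibleU.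
move=> x hx r d r0 d0; apply: contrapT => hpos; apply: hx.
have hz : mu (dball dist x r `&` [set z | `|u z - u x| < d]) = 0%E.
  apply/le_anti/andP; split; last exact: measure_ge0.
  by rewrite leNgt; apply/negP.
set m := Order.min r d.
have m0 : 0 < m by rewrite lt_min r0 d0.
pose n := (Num.truncn (dist z0 x)).+1.
pose k := Num.truncn (2 / m).
pose e : R := k.+1%:R^-1.
have e0 : 0 < e by rewrite invr_gt0 ltr0Sn.
have he : 2 * e <= m.
  have h1 : 2 / m < k.+1%:R by exact: truncnS_gt.
  rewrite /e ler_pdivrMr ?ltr0Sn //.
  by rewrite ltr_pdivrMr // in h1; rewrite mulrC ltW.
have [j hj] := hcc n k x (ltW (truncnS_gt _)).
pose z := Num.floor (k.+1%:R * u x).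
have hzx : `|u x - z%:~R / k.+1%:R| < e.
  have := floor_itv (k.+1%:R * u x); rewrite -/z intrD => /andP[f1 f2].
  have kp : 0 < (k.+1%:R : R) by rewrite ltr0Sn.
  have -> : u x - z%:~R / k.+1%:R = (k.+1%:R * u x - z%:~R) / k.+1%:R.
    by field; rewrite gt_eqF.
  rewrite ger0_norm; last by rewrite divr_ge0 ?subr_ge0 // ltW.
  rewrite /e -[X in _ < X]mul1r ltr_pM2r ?invr_gt0 //.
  by rewrite ltrBlDl.
have Wx : W n k j z x by split.
have Wsub : W n k j z `<=` dball dist x r `&` [set z | `|u z - u x| < d].
  move=> y [hy1 hy2]; rewrite /dball /= in hy1 hy2 *; split.
    have h1 := d_tri x (cc n k j) y.
    have h2 : dist x (cc n k j) = dist (cc n k j) x := d_sym _ _.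
    have hmr : m <= r by rewrite ge_min lexx.
    rewrite -/e in hj hy1; lra.
  have hmd : m <= d by rewrite ge_min lexx orbT.
  have hzx' : `|z%:~R / k.+1%:R - u x| < e by rewrite distrC.
  have hy2' : `|u y - z%:~R / k.+1%:R| < e := hy2.
  have h := ler_normD (u y - z%:~R / k.+1%:R) (z%:~R / k.+1%:R - u x).
  rewrite addrA subrK in h.
  clearbody e; lra.
have W0 : mu (W n k j z) = 0%E.
  apply/le_anti/andP; split; last exact: measure_ge0.
  rewrite -hz; apply: le_measure => //; rewrite inE //.
  by apply: measurableI; [exact: dball_meas | exact: level_meas].
exists n => //; exists k => //; exists j => //.
have Wx' : W' n k j z x by split.
clear -Wx'; move: Wx'; case: z => [i|i] Wx';
  [exists i => //; left | exists i.+1 => //; right] => //.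
Qed.

Lemma lip_good x y : 0 <= C ->
  (forall r d, 0 < r -> 0 < d -> (0 < mu (dball dist x r `&` [set z | (`|u z - u x| < d)%R]))%E) ->
  (forall r d, 0 < r -> 0 < d -> (0 < mu (dball dist y r `&` [set z | (`|u z - u y| < d)%R]))%E) ->
  measurable_fun setT u ->
  `|u x - u y| <= C * dist x y.
Proof.
move=> C0 gx gy mu_; apply/ler_addgt0Pr => eps eps0.
pose del := eps / (2 * (1 + C)).
have hC : 0 < 2 * (1 + C) by apply: mulr_gt0 => //; lra.
have del0 : 0 < del by rewrite divr_gt0.
have hdel : 2 * del + 2 * (C * del) = eps.
  rewrite /del; field; rewrite gt_eqF //; lra.
have mE : measurable (dball dist x del `&` [set z | (`|u z - u x| < del)%R]).
  by apply: measurableI; [exact: dball_meas | exact: level_meas].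
have mF : measurable (dball dist y del `&` [set z | (`|u z - u y| < del)%R]).
  by apply: measurableI; [exact: dball_meas | exact: level_meas].
have [x' [y' [[hx1 hx2] [[hy1 hy2] hxy]]]] := key _ _ mE mF (gx _ _ del0 del0) (gy _ _ del0 del0).
rewrite /dball /= in hx1 hy1.
have t1 : dist x' y' <= dist x y + 2 * del.
  have := d_tri x' x y'; have := d_tri x y y'; rewrite (d_sym x' x) => h1 h2.
  lra.
have t2 : C * dist x' y' <= C * dist x y + 2 * (C * del).
  have := ler_wpM2l C0 t1; rewrite mulrDr.
  by have -> : C * (2 * del) = 2 * (C * del) by ring.
have := ler_normD (u x - u x') (u x' - u y); rewrite addrA subrK => h1.
have := ler_normD (u x' - u y') (u y' - u y); rewrite addrA subrK => h2.
rewrite /= distrC in hx2; rewrite /= in hy2.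
clear -hx2 hy2 h1 h2 hxy t2 hdel; lra.
Qed.
End S.

Theorem proposition3p2 (R : realType) (disp : measure_display)
  (T : measurableType disp) (dist : T -> T -> R)
  (mu : {measure set T -> \bar R}) (p C : R) :
  1 <= p ->
  metric_measure_space dist mu ->
  infinitesimally_doubling dist mu ->
  thick_quasiconvex dist mu p C ->
  forall u : T -> R, newtonian dist mu p u ->
  forall gu : T -> \bar R, minimal_pwug dist mu p u gu ->
  {ae mu, forall x, (gu x <= 1)%E} ->
  exists v : T -> R, lipschitz_with dist C v /\ {ae mu, forall x, v x = u x}.
Proof.
move=> p1 [hm hp hB hballs] _ hthick u [mu_ _ _] gu [hpw _ _] hg1.
have C0 : 0 <= C by have := hthick.1; lra.
have [N [nN hN]] := good_ae dist mu hm hB hp u (point : T) mu_.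
have lipS x y : ~ N x -> ~ N y -> `|u x - u y| <= C * dist x y.
  move=> nx ny; apply: (lip_good _ _ hm hB _ _ _ _ hthick hpw hg1) => //.
  - exact: hN.
  - exact: hN.
have [[y0 Sy0]|nS] := pselect (exists y0, ~ N y0); last first.
  exists (fun _ => 0); split.
    by move=> x y; rewrite subrr normr0 mulr_ge0 // (d_ge0 _ hm).
  apply: negligibleS nN => x _; apply: contrapT => nx; apply: nS; by exists x.
pose A x := [set u y + C * dist x y | y in ~` N].
pose v x := inf (A x).
have Ane x : A x !=set0 by exists (u y0 + C * dist x y0), y0.
have Alb x : has_lbound (A x).
  exists (u y0 - C * dist x y0) => _ [y Sy <-].
  have h1 := lipS y y0 Sy Sy0.
  have h2 := d_tri _ hm y x y0; rewrite (d_sym _ hm y x) in h2.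
  have h3 := ler_wpM2l C0 h2; rewrite mulrDr in h3.
  have := ler_norml (u y - u y0) (C * dist y y0); rewrite h1 => /esym/andP[h4 _].
  lra.
have vle x y : ~ N y -> v x <= u y + C * dist x y.
  by move=> Sy; apply: ge_inf (Alb x) _ _; exists y.
have vlip x x' : v x <= v x' + C * dist x x'.
  rewrite -lerBlDr; apply: lb_le_inf (Ane x') _ => _ [y Sy <-].
  have h1 := vle x y Sy.
  have h2 := d_tri _ hm x x' y.
  have h3 := ler_wpM2l C0 h2; rewrite mulrDr in h3.
  lra.
exists v; split.
  move=> x x'; rewrite ler_norml; apply/andP; split.
    have := vlip x' x; rewrite (d_sym _ hm x' x); lra.
  have := vlip x x'; lra.
apply: negligibleS nN => x /= hvx; apply: contrapT => Sx; apply: hvx.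
apply/le_anti/andP; split.
  by have := vle x x Sx; rewrite (d_xx _ hm) mulr0 addr0.
apply: lb_le_inf (Ane x) _ => _ [y Sy <-].
have := lipS x y Sx Sy; rewrite ler_norml => /andP[_ h]; lra.
Qed.
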